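(* If $\Phi\in\mathcal F\otimes_{\mathbb C}\mathbb C(t_1,t_2)$ (depending on $q$) is a solution of $q\frac{d}{dq}\Phi=\mathsf M_D\Phi$, then $\Theta\Phi_z$ is a solution of $zq\frac{d}{dq}\Phi=\mathsf M_D\Phi$, where $\Phi_z=\Phi(t_1/z,t_2/z,q)$ and $\Theta|\mu\rangle=z^{\ell(\mu)}|\mu\rangle$.
   Context: $\mathcal F$ is the Fock space generated by commuting creation operators $\alpha_{-k}$ ($k>0$) on a vacuum $v_\emptyset$, with annihilators $\alpha_k$, $\alpha_kv_\emptyset=0$, $[\alpha_k,\alpha_l]=k\delta_{k+l,0}$, and basis $|\mu\rangle=\frac1{\mathfrak z(\mu)}\prod_i\alpha_{-\mu_i}v_\emptyset$ indexed by partitions, $\ell(\mu)$ the length. With $|\cdot|=\sum_{k>0}\alpha_{-k}\alpha_k$, $$\mathsf M_D=\mathsf M_D(q;t_1,t_2)=(t_1+t_2)\sum_{k>0}\frac k2\frac{(-q)^k+1}{(-q)^k-1}\alpha_{-k}\alpha_k-\frac{t_1+t_2}{2}\frac{(-q)+1}{(-q)-1}|\cdot|+\frac12\sum_{k,l>0}\big[t_1t_2\alpha_{k+l}\alpha_{-k}\alpha_{-l}-\alpha_{-k-l}\alpha_k\alpha_l\big].$$ *)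

(* Defs.v *)
From HB Require Import structures.
From mathcomp Require Import all_boot all_order all_algebra.
From mathcomp Require Import all_classical all_reals all_analysis.
From mathcomp Require Import complex.
Set Implicit Arguments. Unset Strict Implicit. Unset Printing Implicit Defensive.
Import Order.TTheory GRing.Theory Num.Theory.
Import numFieldNormedType.Exports.
Local Open Scope ring_scope.

Definition is_partition (mu : seq nat) : bool :=
  sorted geq mu && all (fun x => 0 < x)%N mu.

Definition padd (k : nat) (mu : seq nat) : seq nat := sort geq (k :: mu).

Section Fock.
Variable C : numFieldType.

(* A vector of the Fock space F (with coefficients in C) is encoded by its
   coordinate function in the monomial basis p_mu = prod_i alpha_{-mu_i} v_empty
   (= z(mu) |mu>); only the values at partitions are meaningful. *)
Definition fock := seq nat -> C.

(* creation alpha_{-k} : p_nu |-> p_{nu + k} *)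
Definition acr (k : nat) (v : fock) : fock :=
  fun mu => if k \in mu then v (rem k mu) else 0.

(* annihilation alpha_k (k > 0) : p_nu |-> k m_k(nu) p_{nu - k} *)
Definition aan (k : nat) (v : fock) : fock :=
  fun mu => (k * (count_mem k mu).+1)%:R * v (padd k mu).

(* the energy operator |.| = sum_{k>0} alpha_{-k} alpha_k *)
Definition energy (v : fock) : fock := fun mu => (sumn mu)%:R * v mu.

Definition cq (q : C) (k : nat) : C := ((- q) ^+ k + 1) / ((- q) ^+ k - 1).

(* M_D(q; t1, t2).  All the sums over k, l > 0 are finite on each coordinate:
   the terms with k > |mu| or l > |mu| vanish at mu, so truncating at |mu| is exact. *)
Definition MD (q t1 t2 : C) (v : fock) : fock := fun mu =>
  let N := sumn mu in
  (t1 + t2) * (\sum_(1 <= k < N.+1) (k%:R / 2) * cq q k * acr k (aan k v) mu)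
  - (t1 + t2) / 2 * cq q 1 * energy v mu
  + 1 / 2 * (\sum_(1 <= k < N.+1) \sum_(1 <= l < N.+1)
       (t1 * t2 * aan (k + l) (acr k (acr l v)) mu
        - acr (k + l) (aan k (aan l v)) mu)).

Definition Theta (z : C) (v : fock) : fock := fun mu => z ^+ size mu * v mu.

End Fock.

(* Main.v *)
Require Import Defs.
From HB Require Import structures.
From mathcomp Require Import all_boot all_order all_algebra.
From mathcomp Require Import all_classical all_reals all_analysis.
From mathcomp Require Import complex.
From mathcomp Require Import ring.
Import Order.TTheory GRing.Theory Num.Theory.
Import numFieldNormedType.Exports.
Local Open Scope ring_scope.
Local Open Scope complex_scope.

Section Aux.
Variable C : numFieldType.

Lemma size_padd (k : nat) (mu : seq nat) : size (padd k mu) = (size mu).+1.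
Proof. by rewrite /padd size_sort. Qed.

Lemma size_pos_in (k : nat) (mu : seq nat) : k \in mu -> (0 < size mu)%N.
Proof. by case: mu. Qed.
Arguments size_pos_in {k mu}.

Lemma L1 (z : C) (v : fock C) k mu :
  acr k (aan k (Theta z v)) mu = z ^+ size mu * acr k (aan k v) mu.
Proof.
rewrite /acr /aan /Theta; case: ifP => kin; last by rewrite mulr0.
rewrite size_padd size_rem // prednK; last exact: size_pos_in kin.
by rewrite mulrCA.
Qed.

Lemma L2 (z : C) (v : fock C) mu :
  energy (Theta z v) mu = z ^+ size mu * energy v mu.
Proof. by rewrite /energy /Theta mulrCA. Qed.

Lemma L3 (z : C) (v : fock C) k l mu :
  aan (k + l) (acr k (acr l (Theta z v))) mu * z ^+ 2
  = z ^+ (size mu).+1 * aan (k + l) (acr k (acr l v)) mu.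
Proof.
rewrite /acr /aan /Theta; case: ifP => kin; last by rewrite !mulr0 mul0r.
case: ifP => lin; last by rewrite !mulr0 mul0r.
have hp := size_pos_in lin.
have hs : size (rem k (padd (k + l) mu)) = size mu by rewrite size_rem // size_padd.
rewrite size_rem // hs; rewrite hs in hp.
case: (size mu) hp => [//|n] _ /=.
rewrite -[in RHS]addn2 exprD; ring.
Qed.

Lemma L4 (z : C) (v : fock C) k l mu :
  acr (k + l) (aan k (aan l (Theta z v))) mu
  = z ^+ (size mu).+1 * acr (k + l) (aan k (aan l v)) mu.
Proof.
rewrite /acr /aan /Theta; case: ifP => kin; last by rewrite mulr0.
rewrite !size_padd size_rem // prednK; last exact: size_pos_in kin.
ring.
Qed.

Lemma MD_Theta (q a b z : C) (v : fock C) mu :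
  MD q (a * z) (b * z) (Theta z v) mu = z ^+ (size mu).+1 * MD q a b v mu.
Proof.
rewrite /MD.
under eq_bigr => k _ do rewrite L1 mulrCA.
rewrite -mulr_sumr L2.
have E : forall X : C, a * z * (b * z) * X = a * b * (X * z ^+ 2).
  by move=> X; rewrite expr2; ring.
have F : forall X Y : C, a * b * (z ^+ (size mu).+1 * X) - z ^+ (size mu).+1 * Y
   = z ^+ (size mu).+1 * (a * b * X - Y).
  by move=> X Y; ring.
set N := (sumn mu).+1.
have -> : \sum_(1 <= k < N) \sum_(1 <= l < N)
   (a * z * (b * z) * aan (k + l) (acr k (acr l (Theta z v))) mu
    - acr (k + l) (aan k (aan l (Theta z v))) mu)
  = z ^+ (size mu).+1 * \sum_(1 <= k < N) \sum_(1 <= l < N)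
   (a * b * aan (k + l) (acr k (acr l v)) mu
    - acr (k + l) (aan k (aan l v)) mu).
  rewrite mulr_sumr; apply: eq_bigr => k _; rewrite mulr_sumr; apply: eq_bigr => l _.
  by rewrite L4 E L3 F.
rewrite exprS; ring.
Qed.
End Aux.
Theorem proposition1 (R : realType)
  (Phi : R[i] -> R[i] -> R[i] -> fock R[i])
  (D : R[i] -> R[i] -> R[i] -> Prop) (z : R[i]) :
  z != 0 ->
  (forall t1 t2 q, D t1 t2 q ->
     exists N : nat, forall mu, is_partition mu -> (N < sumn mu)%N ->
       Phi t1 t2 q mu = 0) ->
  (forall t1 t2 q mu, D t1 t2 q -> is_partition mu ->
     derivable (fun s : R[i]^o => (Phi t1 t2 s mu : R[i]^o)) q 1 /\
     q * 'D_1 (fun s : R[i]^o => (Phi t1 t2 s mu : R[i]^o)) q = MD q t1 t2 (Phi t1 t2 q) mu) ->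
  let Psi := fun t1 t2 q => Theta z (Phi (t1 / z) (t2 / z) q) in
  forall t1 t2 q mu, D (t1 / z) (t2 / z) q -> is_partition mu ->
     derivable (fun s : R[i]^o => (Psi t1 t2 s mu : R[i]^o)) q 1 /\
     z * q * 'D_1 (fun s : R[i]^o => (Psi t1 t2 s mu : R[i]^o)) q = MD q t1 t2 (Psi t1 t2 q) mu.
Proof.
move=> z0 _ Hd Psi t1 t2 q mu HD Hmu.
have [d e] := Hd _ _ _ mu HD Hmu.
have -> : (fun s : R[i]^o => (Psi t1 t2 s mu : R[i]^o)) =
  (z ^+ size mu) \*: (fun s : R[i]^o => (Phi (t1/z) (t2/z) s mu : R[i]^o)).
  by apply: funext => s.
split; first exact: derivableZ.
rewrite deriveZ //.
have -> : MD q t1 t2 (Psi t1 t2 q) mu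
  = MD q (t1 / z * z) (t2 / z * z) (Theta z (Phi (t1 / z) (t2 / z) q)) mu.
  by rewrite !divfK.
rewrite MD_Theta -e exprS.
rewrite -[_ *: _]/(_ * _).
ring.
Qed.
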